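(* Let $\mathcal{X}$ be a Polish space, $J:\mathcal{X}\to[0,+\infty]$ lower semicontinuous, and $Q\in\mathcal{P}(\mathcal{X})$. Then $$\sup_{f\in C_b(\mathcal{X})}\Big\{\int f\,dQ-\sup_{x\in\mathcal{X}}(f(x)-J(x))\Big\}=\int J\,dQ.$$ More generally, if $(\mathcal{X}_n^Q)_{n\ge1}$ is an increasing sequence of closed subsets of $\mathcal{X}$ with $\lim_nQ(\mathcal{X}_n^Q)=1$ and $\mathcal{G}_Q=\bigcup_{n\ge1}\mathcal{C}(\mathcal{X}_n^Q)$, where $\mathcal{C}(\mathcal{X}_o)=\{\mathbf{1}_{\mathcal{X}_o}\tilde f:\tilde f\in C_b(\mathcal{X})\}$, then the same identity holds with $C_b(\mathcal{X})$ replaced by $\mathcal{G}_Q$.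
   Context: $C_b(\mathcal{X})$: bounded continuous real functions; $\mathbf{1}_{\mathcal{X}_o}$ the indicator function of $\mathcal{X}_o$. *)

(* Defs.v *)
From HB Require Import structures.
From mathcomp Require Import all_boot all_order all_algebra.
From mathcomp Require Import all_classical all_reals all_analysis.
Set Implicit Arguments. Unset Strict Implicit. Unset Printing Implicit Defensive.
Import Order.TTheory GRing.Theory Num.Theory.
Import numFieldNormedType.Exports.
Local Open Scope classical_set_scope.
Local Open Scope ring_scope.

(* A Polish space, realized as a complete metric space (the topology is the
   metric topology of the complete pseudometric), which is Hausdorff (so the
   pseudometric is a metric) and separable (has a countable dense subset). *)
Definition polish_space (R : realType) (T : completePseudoMetricType R) : Prop :=
  hausdorff_space T /\ exists D : set T, countable D /\ dense D.

Definition borel_type (T : ptopologicalType) := g_sigma_algebraType (@open T).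

Definition Cb (R : realType) (T : topologicalType) : set (T -> R) :=
  [set f | continuous f /\ exists M : R, forall x, `|f x| <= M].
Arguments Cb : clear implicits.

Definition CXo (R : realType) (T : topologicalType) (Xo : set T) : set (T -> R) :=
  [set g | exists2 f, Cb R T f & g = (fun x => \1_Xo x * f x)].
Arguments CXo : clear implicits.
Arguments CXo R {T} Xo.

Definition dual_objective (R : realType) (T : ptopologicalType)
    (Q : probability (borel_type T) R) (J : T -> \bar R) (f : T -> R) : \bar R :=
  ((\int[Q]_(x in setT) (f x)%:E)
   - ereal_sup (range (fun x : T => (f x)%:E - J x)))%E.

(* Main.v *)
Require Import Defs.
From HB Require Import structures.
From mathcomp Require Import all_boot all_order all_algebra.
From mathcomp Require Import all_classical all_reals all_analysis.
From mathcomp Require Import measurable_realfun.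
From mathcomp Require Import ring lra.
Import Order.TTheory GRing.Theory Num.Theory.
Import numFieldNormedType.Exports.
Local Open Scope classical_set_scope.
Local Open Scope ring_scope.

Section S.
Context {R : realType} {T : completePseudoMetricType R}.
Local Notation BT := (borel_type T).

Lemma open_mB (A : set T) : open A -> measurable (A : set BT).
Proof. by move=> oA; apply: sub_sigma_algebra. Qed.

Lemma closed_mB (A : set T) : closed A -> measurable (A : set BT).
Proof.
move=> cA; rewrite -(setCK A); apply: measurableC; apply: open_mB.
exact: closed_openC.
Qed.

Lemma cont_mB (f : T -> R) : continuous f -> measurable_fun [set: BT] (f : BT -> R).
Proof.
move=> /continuousP cf; apply: (measurability _ (measurable_realfun.RGenOpens.measurableE R)).
move=> _ [_ [a [b ->] <-]]; apply: measurableI => //; apply: open_mB.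
exact/cf/interval_open.
Qed.

Lemma lsc_mB (f : T -> \bar R) : lower_semicontinuous f -> @measurable_fun _ _ BT (\bar R) setT f.
Proof.
move=> scif; apply: (measurability _ (measurable_realfun.ErealGenOInfty.measurableE R)).
move=> /= _ [_ [a ->]] <-; apply: measurableI => //; apply: open_mB.
by rewrite preimage_itvoy; move/lower_semicontinuousP : scif; exact.
Qed.

Lemma weak_dual (Q : probability BT R) (J : T -> \bar R)
  (J0 : forall x, (0 <= J x)%E) (mJ : @measurable_fun _ _ BT (\bar R) setT J)
  (g : T -> R) (mg : measurable_fun [set: BT] (g : BT -> R)) (M : R)
  (gb : forall x, `|g x| <= M) :
  (dual_objective Q J g <= \int[Q]_(x in setT) J x)%E.
Proof.
rewrite /dual_objective.
set s := ereal_sup _.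
have QT : Q [set: BT] = 1%E := probability_setT Q.
have ig : Q.-integrable [set: BT] (EFin \o (g : BT -> R)).
  apply: measurable_bounded_integrable => //.
    by rewrite [X in (X < _)%E](_ : _ = 1%E) ?ltry //; exact: probability_setT.
  exists M; split; first by rewrite num_real.
  move=> y My x _; exact: (le_trans (gb x) (ltW My)).
case Es : s => [r| |].
- have H x : ((g x - r)%:E <= J x)%E.
    have : ((g x)%:E - J x <= s)%E by apply: ereal_sup_ubound; exists x.
    rewrite Es; move: (J0 x); case: (J x) => [y| |] //= _.
    + by rewrite -EFinD !lee_fin => ?; lra.
    + by rewrite leey.
  have -> : (\int[Q]_(x in setT) (g x)%:E - r%:E =
      \int[Q]_(x in setT) ((g x)%:E - (cst r x)%:E))%E.
    rewrite integralB_EFin //; last exact: finite_measure_integrable_cst.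
    congr (_ - _)%E; rewrite (eq_integral (cst r%:E)) // integral_cst //.
    by rewrite [X in (_ * X)%E](_ : _ = 1%E) ?mule1 //; exact: probability_setT.
  rewrite integralE.
  apply: (le_trans (y := (\int[Q]_(x in setT) ((fun x => (g x)%:E - (cst r x)%:E)^\+ x) - 0)%E)).
    apply: leeB => //; exact: integral_ge0.
  rewrite sube0; apply: ge0_le_integral => //.
  + apply: measurable_funepos; apply: measurableT_comp => //.
    by apply: measurable_funB => //.
  + move=> x _; rewrite funeposE ge_max J0 andbT; have := H x.
    by rewrite EFinB.
- by rewrite addeNy leNye.
- have Jy x : J x = +oo%E.
    have : ((g x)%:E - J x <= s)%E by apply: ereal_sup_ubound; exists x.
    rewrite Es leeNy_eq; move: (J0 x); case: (J x) => //.
  rewrite [X in (_ <= X)%E](eq_integral (fun _ => +oo%E)); last by move=> x _; rewrite Jy.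
  rewrite integral_cst //.
  by rewrite [X in (_ * X)%E](_ : _ = 1%E) ?mule1 ?leey //; exact: probability_setT.
Qed.

Section Jk.
Variable (J : T -> \bar R).
Hypothesis J0 : forall x, (0 <= J x)%E.
Hypothesis J_lsc : lower_semicontinuous J.

Local Open Scope ereal_scope.

Definition cR (k : nat) : R := k.+1%:R.

Definition term (k : nat) (x y : T) : \bar R :=
  mine (J y) (cR k)%:E + (cR k)%:E * edist (x, y).

Definition Jk (k : nat) (x : T) : \bar R :=
  ereal_inf [set term k x y | y in setT].

Lemma cR_gt0 k : (0 < cR k)%R.
Proof. by rewrite /cR ltr0n. Qed.

Lemma edist_xx (x : T) : edist (x, x) = 0.
Proof. by apply/edist_closeP; exact: close_refl. Qed.

Lemma term_ge0 k x y : 0 <= term k x y.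
Proof.
rewrite /term; apply: adde_ge0.
  by rewrite le_min J0 lee_fin ltW ?cR_gt0.
by apply: mule_ge0; [rewrite lee_fin ltW ?cR_gt0|exact: edist_ge0].
Qed.

Lemma Jk_ge0 k x : 0 <= Jk k x.
Proof. by apply/ereal_infP => _ [y _ <-]; exact: term_ge0. Qed.

Lemma Jk_le k x : Jk k x <= mine (J x) (cR k)%:E.
Proof.
apply: ge_ereal_inf; exists (term k x x); first by exists x.
by rewrite /term edist_xx mule0 adde0.
Qed.

Lemma Jk_leJ k x : Jk k x <= J x.
Proof. by rewrite (le_trans (Jk_le k x)) // ge_min lexx. Qed.

Lemma Jk_lec k x : Jk k x <= (cR k)%:E.
Proof. by rewrite (le_trans (Jk_le k x)) // ge_min lexx orbT. Qed.

Lemma Jk_fin k x : Jk k x \is a fin_num.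
Proof.
by rewrite ge0_fin_numE ?Jk_ge0 // (le_lt_trans (Jk_lec k x)) ?ltry.
Qed.

Lemma Jk_nd x : nondecreasing_seq (Jk ^~ x).
Proof.
move=> k k' kk'; apply/ereal_infP => _ [y _ <-].
apply: ge_ereal_inf; exists (term k x y); first by exists y.
have ckk : (cR k <= cR k')%R by rewrite /cR ler_nat ltnS.
rewrite /term; apply: leeD.
  by rewrite le_min ge_min lexx /= ge_min lee_fin ckk orbT.
by apply: lee_wpmul2r => //; rewrite lee_fin.
Qed.

Lemma Jk_lip k x x' r : (0 < r)%R -> ball x r x' ->
  Jk k x' <= Jk k x + (cR k * r)%:E.
Proof.
move=> r0 bxx'.
rewrite -leeBlDr //; apply/ereal_infP => _ [y _ <-].
rewrite leeBlDr //.
apply: (le_trans (y := term k x' y)).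
  by apply: ge_ereal_inf; exists (term k x' y) => //; exists y.
rewrite /term -addeA; apply: leeD => //.
have d1 : edist (x', x) <= r%:E by apply: edist_fin => //; exact: ball_sym.
have : edist (x', y) <= r%:E + edist (x, y).
  by apply: (le_trans (edist_triangle x' x y)); apply: leeD.
move=> /(lee_wpmul2l (x := (cR k)%:E)) H.
rewrite (le_trans (H _)) //; first by rewrite lee_fin ltW ?cR_gt0.
rewrite ge0_muleDr; [|by rewrite lee_fin ltW|exact: edist_ge0].
by rewrite -EFinM addeC.
Qed.

Definition fk (k : nat) (x : T) : R := fine (Jk k x).

Lemma fkE k x : (fk k x)%:E = Jk k x.
Proof. by rewrite /fk fineK // Jk_fin. Qed.

Lemma fk_ge0 k x : (0 <= fk k x)%R.
Proof. by rewrite -lee_fin fkE Jk_ge0. Qed.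

Lemma fk_le k x : (fk k x <= cR k)%R.
Proof. by rewrite -lee_fin fkE Jk_lec. Qed.

Lemma fk_leJ k x : (fk k x)%:E <= J x.
Proof. by rewrite fkE Jk_leJ. Qed.

Lemma fk_cont k : continuous (fk k).
Proof.
move=> x; apply/cvgrPdist_le => e e0.
have er : (0 < e / cR k)%R by rewrite divr_gt0 ?cR_gt0.
apply: filterS (nbhsx_ballx x _ er) => x' bxx'.
have h1 := @Jk_lip k x x' _ er bxx'.
have h2 := @Jk_lip k x' x _ er (ball_sym bxx').
rewrite -!fkE -EFinD lee_fin mulrC divfK ?gt_eqF ?cR_gt0 // in h1.
rewrite -!fkE -EFinD lee_fin mulrC divfK ?gt_eqF ?cR_gt0 // in h2.
rewrite ler_norml; apply/andP; split; lra.
Qed.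

Lemma fk_Cb k : Cb R T (fk k).
Proof.
split; first exact: fk_cont.
exists (cR k) => x; rewrite ger0_norm ?fk_ge0 //; exact: fk_le.
Qed.

Lemma le_approx (u v : \bar R) : (forall r : R, r%:E < u -> r%:E <= v) -> u <= v.
Proof.
move=> H; rewrite leNgt; apply/negP => vu.
case: v vu H => [s| |] vu H.
- case: u vu H => [t| |] // vu H.
    rewrite lte_fin in vu.
    have := H ((s + t) / 2)%R; rewrite lte_fin lee_fin.
    by move=> /(_ ltac:(lra)); lra.
  have := H (s + 1)%R; rewrite lee_fin => /(_ (ltry _)); lra.
- by move: vu; rewrite ltNge leey.
- case: u vu H => [t| |] // vu H.
    by have := H (t - 1)%R; rewrite lte_fin leeNy_eq => /(_ ltac:(lra)).
  by have := H 0%R; rewrite leeNy_eq => /(_ (ltry _)).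
Qed.

Lemma Jk_sup x : ereal_sup (range (Jk ^~ x)) = J x.
Proof.
apply/eqP; rewrite eq_le; apply/andP; split.
  by apply/ereal_supP => _ [k _ <-]; exact: Jk_leJ.
apply: le_approx => a aJ.
have [a0|a0] := leP a 0%R.
  apply: (le_trans (y := Jk 0 x)); last by apply: ereal_sup_ubound; exists 0%N.
  by rewrite (le_trans _ (Jk_ge0 0 x)) // lee_fin.
have [V /nbhs_ballP [r r0 rV] aV] := J_lsc x a aJ.
pose m := Num.max a (a / r)%R.
have m0 : (0 <= m)%R by rewrite le_max ltW.
pose k := Num.Def.archi_bound m.
have mk : (m < cR k)%R.
  by rewrite (lt_le_trans (archi_boundP m0)) // /cR ler_nat.
have ac : (a <= cR k)%R by apply: ltW; apply: le_lt_trans mk; rewrite le_max lexx.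
have acr : (a <= cR k * r)%R.
  have : (a / r <= cR k)%R by apply: ltW; apply: le_lt_trans mk; rewrite le_max lexx orbT.
  by rewrite ler_pdivrMr.
apply: (le_trans (y := Jk k x)); last by apply: ereal_sup_ubound; exists k.
apply/ereal_infP => _ [y _ <-]; rewrite /term.
have [bxy|nbxy] := pselect (ball x r y).
  apply: (le_trans _ (leeDl _ _)); last by apply: mule_ge0; [rewrite lee_fin ltW ?cR_gt0|exact: edist_ge0].
  by rewrite le_min (ltW (aV _ (rV _ bxy))) lee_fin ac.
have dr : r%:E <= edist (x, y).
  by rewrite leNgt; apply/negP => /edist_lt_ball.
apply: (le_trans _ (leeDr _ _)); last by rewrite le_min J0 lee_fin ltW ?cR_gt0.
apply: (le_trans (y := (cR k)%:E * r%:E)); first by rewrite -EFinM lee_fin.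
by apply: lee_wpmul2l => //; rewrite lee_fin ltW ?cR_gt0.
Qed.

Lemma Jk_cvg x : Jk ^~ x @ \oo --> J x.
Proof. by rewrite -Jk_sup; apply: ereal_nondecreasing_cvgn; exact: Jk_nd. Qed.
End Jk.

Section Main.
Variable (Q : probability BT R) (J : T -> \bar R).
Hypothesis J0 : forall x, (0 <= J x)%E.
Hypothesis J_lsc : lower_semicontinuous J.
Local Open Scope ereal_scope.

Lemma fk_mB k : measurable_fun [set: BT] (fk J k : BT -> R).
Proof. by apply: cont_mB; apply: fk_cont. Qed.

Lemma main_gen (S : set (T -> R)) (Xn : nat -> set T)
  (mX : forall n, measurable (Xn n : set BT))
  (ndX : forall n m, (n <= m)%N -> Xn n `<=` Xn m)
  (QU : Q (\bigcup_n Xn n : set BT) = 1)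
  (Sub : forall g, S g -> measurable_fun [set: BT] (g : BT -> R) /\
                           exists M, forall x, (`|g x| <= M)%R)
  (Sin : forall m, S (fun x => \1_(Xn m) x * fk J m x)%R) :
  ereal_sup (dual_objective Q J @` S) = \int[Q]_(x in setT) J x.
Proof.
have mJ := @lsc_mB J J_lsc.
apply/eqP; rewrite eq_le; apply/andP; split.
  apply/ereal_supP => _ [g Sg <-].
  have [mg [M gM]] := Sub g Sg.
  exact: (@weak_dual Q J J0 mJ g mg M gM).
pose U : set BT := \bigcup_n Xn n.
have mU : measurable U by apply: bigcupT_measurable.
have QN : Q (~` U) = 0.
  by rewrite probability_setC // QU subee.
pose h m x := (\1_(Xn m) x * fk J m x)%R.
pose g' m x := (h m x)%:E.
have h0 m x : (0 <= h m x)%R.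
  rewrite /h indicE; case: (x \in Xn m) => /=; rewrite ?mul1r ?mul0r //. exact: (fk_ge0 J J0).
have hf m x : (h m x <= fk J m x)%R.
  by rewrite /h indicE; case: (x \in Xn m) => /=; rewrite ?mul1r ?mul0r //; exact: (fk_ge0 J J0).
have mh m : measurable_fun [set: BT] (h m : BT -> R).
  apply: measurable_funM; last exact: fk_mB.
  exact: measurable_indic.
have mg' m : measurable_fun U (g' m).
  apply: measurable_funTS; exact/measurable_EFinP.
have g'0 m x : U x -> 0 <= g' m x by move=> _; rewrite lee_fin.
have nd_g' x : U x -> nondecreasing_seq (g'^~ x).
  move=> _ m m' mm'; rewrite /g' /h lee_fin !indicE.
  case: (boolP (x \in Xn m)) => xm.
    have xm' : x \in Xn m'.
      by apply/mem_set; apply: (ndX _ _ mm'); exact/set_mem.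
    rewrite xm' !mul1r -lee_fin !(fkE J J0); exact: (Jk_nd J x m m' mm').
  by rewrite mul0r mulr_ge0 // (fk_ge0 J J0).
have MC := @cvg_monotone_convergence _ _ _ Q _ mU _ mg' g'0 nd_g'.
have E1 : \int[Q]_(x in U) limn (g'^~ x) = \int[Q]_(x in setT) J x.
  rewrite [RHS](ge0_negligible_integral _ _ _ _ QN) //; last first.
    exact: measurableC.
  have -> : [set: BT] `\` ~` U = U.
    by apply/seteqP; split=> y /=; [move=> [_ /contrapT]|move=> Uy; split=> //; apply].
 apply: eq_integral => x /[!inE] -[m _ xm].
  apply/cvg_lim => //; apply: cvg_trans (Jk_cvg J J0 J_lsc x).
  apply: near_eq_cvg; near=> m'.
  have xm' : x \in Xn m' by rewrite inE; apply: (ndX m); [near: m'; exists m|].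
  by rewrite /g' /h indicE xm' mul1r (fkE J J0).
have E2 m : \int[Q]_(x in U) g' m x = \int[Q]_(x in setT) g' m x.
  rewrite [RHS](ge0_negligible_integral _ _ _ _ QN) //.
  - have -> : [set: BT] `\` ~` U = U.
      by apply/seteqP; split=> y /=; [move=> [_ /contrapT]|move=> Uy; split=> //; apply].
    by [].
  - by apply: measurableC.
  - exact/measurable_EFinP.
  - by move=> x _; rewrite lee_fin.
rewrite -E1 -(cvg_lim _ MC) //.
apply: lime_le; first by apply/cvg_ex; eexists; exact: MC.
apply: nearW => m; rewrite E2.
apply: (le_trans (y := dual_objective Q J (h m))); last first.
  by apply: ereal_sup_ubound; exists (h m) => //; exact: Sin.
rewrite /dual_objective.
set s := ereal_sup _.
have s0 : s <= 0.
  apply/ereal_supP => _ [x _ <-]; rewrite sube_le0.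
  apply: le_trans (fk_leJ J J0 m x); rewrite lee_fin; exact: hf.
rewrite -[X in X <= _]sube0; apply: leeB => //.
Unshelve. all: by end_near. Qed.
End Main.
End S.

Theorem mainTheorem12 (R : realType) (T : completePseudoMetricType R)
  (HT : polish_space T) (J : T -> \bar R)
  (J_ge0 : forall x, (0 <= J x)%E) (J_lsc : lower_semicontinuous J)
  (Q : probability (borel_type T) R) :
  ereal_sup (dual_objective Q J @` Cb R T) = (\int[Q]_(x in setT) J x)%E /\
  (forall Xn : nat -> set T,
     (forall n, closed (Xn n)) ->
     (forall n, Xn n `<=` Xn n.+1) ->
     (Q (Xn n) @[n --> \oo] --> 1%E) ->
     ereal_sup (dual_objective Q J @` \bigcup_n CXo R (Xn n))
       = (\int[Q]_(x in setT) J x)%E).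
Proof.
split.
  apply: (@main_gen R T Q J J_ge0 J_lsc _ (fun _ => setT)).
  - by move=> _; exact: measurableT.
  - by [].
  - rewrite bigcup_const; last by exists 0%N.
    exact: probability_setT.
  - move=> g [cg [M gM]]; split; first exact: cont_mB.
    by exists M.
  - move=> m.
    have -> : (fun x => \1_[set: T] x * fk J m x) = fk J m.
      by apply/funext => x; rewrite indicE in_setT mul1r.
    exact: fk_Cb.
move=> Xn cX stepX QX.
have ndX : forall n m, (n <= m)%N -> Xn n `<=` Xn m.
  move=> n m /subnK <-; elim: (m - n)%N => [|d IH] //= x Xx.
  by apply: stepX; exact: IH.
apply: (@main_gen R T Q J J_ge0 J_lsc _ Xn).
- by move=> n; exact: closed_mB.
- exact: ndX.
- have mX n : measurable (Xn n : set (borel_type T)) by exact: closed_mB.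
  have nd : nondecreasing_seq (Xn : (set (borel_type T))^nat).
    by move=> n m nm; apply/subsetPset; exact: ndX.
  have H' := nondecreasing_cvg_mu (mu := Q) (F := Xn) mX (bigcupT_measurable _ mX) nd.
  exact: (cvg_unique (@ereal_hausdorff R) H' QX).
- move=> g [n _ [f [cf [M fM]] ->]]; split.
    apply: measurable_funM; last exact: cont_mB.
    by apply: measurable_indic; apply: closed_mB; exact: (cX n).
  exists M => x; rewrite indicE; case: (x \in Xn n) => /=.
    by rewrite mul1r; exact: fM.
  by rewrite mul0r normr0; exact: (le_trans (normr_ge0 _) (fM x)).
- move=> m; exists m => //; exists (fk J m) => //.
  exact: fk_Cb.
Qed.
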